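(* For any finite graph $G$ with at least one edge, the family $\mathcal{C}(G)$ has Helly number $2$.
   Context: Let $X=\mathrm{MIS}(G)$ be the set of maximal independent sets of $G$; for $S\subseteq V(G)$ let $K_S=\{I\in X: S\subseteq I\}$; $\mathcal{C}(G)=\{K_S: S\subseteq V(G)\}$. The Helly number of a set system $\mathcal{F}$ is the minimum integer $h$ such that for every finite subfamily $\mathcal{G}\subseteq\mathcal{F}$, if every $h$ members of $\mathcal{G}$ have a common point, then all members of $\mathcal{G}$ have a common point. *)

(* Defs.v *)
From mathcomp Require Import all_boot.
Set Implicit Arguments. Unset Strict Implicit. Unset Printing Implicit Defensive.

Definition simple_graph (V : finType) (e : rel V) : Prop :=
  symmetric e /\ irreflexive e.

Definition independent (V : finType) (e : rel V) (I : {set V}) : bool :=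
  [forall x in I, forall y in I, ~~ e x y].

Definition MIS (V : finType) (e : rel V) : {set {set V}} :=
  [set I | maxset (independent e) I].

Definition K (V : finType) (e : rel V) (S : {set V}) : {set {set V}} :=
  [set I in MIS e | S \subset I].

Definition Cfam (V : finType) (e : rel V) : {set {set {set V}}} :=
  [set K e S | S : {set V}].

Definition has_common_point (T : finType) (H : {set {set T}}) : Prop :=
  exists x : T, forall A, A \in H -> x \in A.

Definition helly_prop (T : finType) (F : {set {set T}}) (h : nat) : Prop :=
  forall Gs : {set {set T}}, Gs \subset F ->
    (forall H : {set {set T}}, H \subset Gs -> #|H| <= h -> has_common_point H) ->
    has_common_point Gs.

Definition helly_number_is (T : finType) (F : {set {set T}}) (h : nat) : Prop :=
  helly_prop F h /\ forall h', helly_prop F h' -> h <= h'.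

(* Main.v *)
Require Import Defs.
From mathcomp Require Import all_boot.

Set Implicit Arguments. Unset Strict Implicit.
Section Aux.
Context {V : finType} {e : rel V}.

Lemma ext_mis (S : {set V}) : independent e S -> exists I, I \in MIS e /\ S \subset I.
Proof.
move=> hS; case: (maxset_exists hS) => I hI sub.
by exists I; split => //; rewrite inE.
Qed.

Lemma mis_indep I : I \in MIS e -> independent e I.
Proof. by rewrite inE => /maxsetp. Qed.

Lemma indepP (S : {set V}) :
  (forall x y, x \in S -> y \in S -> ~~ e x y) -> independent e S.
Proof.
move=> h; apply/forall_inP => x xS; apply/forall_inP => y yS; exact: h.
Qed.

Lemma indepE (S : {set V}) x y : independent e S -> x \in S -> y \in S -> ~~ e x y.
Proof. by move=> /forall_inP h xS yS; move/forall_inP: (h x xS); apply. Qed.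

Lemma K_sub S : K e S \subset MIS e.
Proof. by apply/subsetP => I; rewrite inE => /andP []. Qed.

End Aux.

Theorem proposition2p10 (V : finType) (e : rel V) :
  simple_graph e -> (exists u v : V, e u v) ->
  helly_number_is (Cfam e) 2.
Proof.
move=> [esym eirr] [u [v euv]].
split.
- move=> Gs sGs hH.
  pose S := [set x | [exists A in Gs, [forall I in A, x \in I]]].
  have hS : independent e S.
    apply: indepP => x y.
    rewrite !inE => /exists_inP [A AG /forall_inP hA] /exists_inP [B BG /forall_inP hB].
    have [I hI] := hH [set A; B] ltac:(by apply/subsetP=> C; rewrite !inE => /orP [] /eqP ->)
                                  ltac:(by rewrite cards2; case: (A != B)).
    have IA : I \in A by apply: hI; rewrite !inE eqxx.
    have IB : I \in B by apply: hI; rewrite !inE eqxx orbT.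
    have /imsetP [SA _ EA] := subsetP sGs A AG.
    have IM : I \in MIS e by move: IA; rewrite EA => /(subsetP (@K_sub _ e SA)).
    exact: (indepE (mis_indep IM) (hA I IA) (hB I IB)).
  have [I [IM SI]] := ext_mis hS.
  exists I => A AG.
  have /imsetP [SA _ EA] := subsetP sGs A AG.
  rewrite EA inE IM /=.
  apply/subsetP => x xSA; apply: (subsetP SI); rewrite inE.
  apply/exists_inP; exists A => //; apply/forall_inP => J; rewrite EA inE => /andP [_ sJ].
  exact: (subsetP sJ).
- move=> h hh; rewrite leqNgt; apply/negP => lt2.
  have single w : exists I, I \in MIS e /\ w \in I.
    have [I [IM sI]] := ext_mis (S := [set w]) (e := e)
      ltac:(apply: indepP => x y; rewrite !inE => /eqP -> /eqP ->; by rewrite eirr).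
    by exists I; split => //; apply: (subsetP sI); rewrite inE.
  pose Gs := [set K e [set u]; K e [set v]].
  have sub : Gs \subset Cfam e.
    by apply/subsetP => C; rewrite !inE => /orP [] /eqP ->; apply/imsetP; eexists.
  have [I hI] : has_common_point Gs.
    apply: hh => // H sH cH.
    have c1 : #|H| <= 1 by apply: leq_trans cH _; rewrite -ltnS.
    case: (posnP #|H|) => [/cards0_eq -> | pos].
      have [I [IM _]] := single u; by exists I => A; rewrite inE.
    have /cards1P [A HA] : #|H| == 1 by rewrite eqn_leq c1 pos.
    rewrite HA in sH *.
    have : A \in Gs by apply: (subsetP sH); rewrite set11.
    rewrite !inE => /orP [] /eqP ->.
      have [I [IM uI]] := single u; exists I => B; rewrite inE => /eqP ->.
      by rewrite inE IM sub1set.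
    have [I [IM vI]] := single v; exists I => B; rewrite inE => /eqP ->.
    by rewrite inE IM sub1set.
  have := hI (K e [set u]); rewrite !inE eqxx sub1set => /(_ isT) /andP [IM uI].
  have := hI (K e [set v]); rewrite !inE eqxx orbT sub1set => /(_ isT) /andP [_ vI].
  by have := indepE (maxsetp IM) uI vI; rewrite euv.
Qed.
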